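(* Let $\mathscr F$ be a universally separable class of functions $\Omega\to[0,1]$, $\varepsilon>0$ and $d\in\mathbb N$. The following are equivalent: (1) $\mathrm{fat}_\varepsilon(\mathscr F\,\mathrm{mod}\,\omega_1)\le d$; (2) there is a countable set $N\subseteq\Omega$ such that $\mathrm{fat}_\varepsilon(\mathscr F\restriction(\Omega\setminus N))\le d$.
   Context: $\mathscr F$ is universally separable if it has a countable subfamily $\mathscr F'$ such that every $f\in\mathscr F$ is a pointwise limit of a sequence from $\mathscr F'$. A finite $A\subseteq X$ is $\varepsilon$-fat shattered by $\mathscr F$ if there is $h:A\to[0,1]$ such that for every $B\subseteq A$ some $f_B\in\mathscr F$ has $f_B(a)>h(a)+\varepsilon$ for $a\in B$ and $f_B(a)<h(a)-\varepsilon$ for $a\in A\setminus B$; $\mathrm{fat}_\varepsilon(\mathscr F\restriction X)$ is the supremum of sizes of such $A\subseteq X$. $\mathrm{fat}_\varepsilon(\mathscr F\,\mathrm{mod}\,\omega_1)$ is the supremum of $n$ for which there exist uncountable $A_1,\dots,A_n\subseteq\Omega$ and $h:\{1,\dots,n\}\to[0,1]$ such that for every $J\subseteq\{1,\dots,n\}$ there is $f_J\in\mathscr F$ with $f_J(x)>h(i)+\varepsilon$ whenever $i\in J$, $x\in A_i$, and $f_J(x)<h(i)-\varepsilon$ whenever $i\notin J$, $x\in A_i$. *)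

(* Defs.v *)
From Stdlib Require Import Reals List.
Open Scope R_scope.

(* A set S ⊆ T (as a predicate) is countable iff some map T -> nat is injective on S
   (this includes finite and empty sets). *)
Definition countable {T : Type} (S : T -> Prop) : Prop :=
  exists g : T -> nat, forall x y, S x -> S y -> g x = g y -> x = y.

Definition universally_separable {Omega : Type} (F : (Omega -> R) -> Prop) : Prop :=
  exists F' : (Omega -> R) -> Prop,
    (forall f, F' f -> F f) /\ countable F' /\
    forall f, F f -> exists u : nat -> (Omega -> R),
      (forall n, F' (u n)) /\ forall x, Un_cv (fun n => u n x) (f x).

Definition fat_shattered {Omega : Type} (eps : R) (F : (Omega -> R) -> Prop)
  (A : list Omega) : Prop :=
  exists h : Omega -> R,
    (forall a, In a A -> 0 <= h a <= 1) /\
    forall B : Omega -> Prop, exists f, F f /\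
      forall a, In a A ->
        (B a -> f a > h a + eps) /\ (~ B a -> f a < h a - eps).

Definition fat_restr_le {Omega : Type} (eps : R) (F : (Omega -> R) -> Prop)
  (X : Omega -> Prop) (d : nat) : Prop :=
  forall A : list Omega, NoDup A -> (forall a, In a A -> X a) ->
    fat_shattered eps F A -> (length A <= d)%nat.

Definition fat_mod_omega1_le {Omega : Type} (eps : R) (F : (Omega -> R) -> Prop)
  (d : nat) : Prop :=
  forall (n : nat) (A : nat -> Omega -> Prop) (h : nat -> R),
    (forall i, (i < n)%nat -> ~ countable (A i)) ->
    (forall i, (i < n)%nat -> 0 <= h i <= 1) ->
    (forall J : nat -> Prop, exists f, F f /\
       forall i, (i < n)%nat -> forall x, A i x ->
         (J i -> f x > h i + eps) /\ (~ J i -> f x < h i - eps)) ->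
    (n <= d)%nat.

(* Main.v *)
Require Import Defs.
From Stdlib Require Import Reals List Lra Lia Classical ClassicalEpsilon ZArith.
From Stdlib Require Cantor.
Open Scope R_scope.

Lemma pair_inj : forall p q : nat * nat, Cantor.to_nat p = Cantor.to_nat q -> p = q.
Proof. intros p q H. rewrite <- (Cantor.cancel_of_to p), <- (Cantor.cancel_of_to q), H. reflexivity. Qed.

Lemma cnt_sub {T} (P Q : T -> Prop) : (forall x, P x -> Q x) -> countable Q -> countable P.
Proof. intros H [g Hg]. exists g. intros; apply Hg; auto. Qed.

Lemma cnt_prod {T U} (P : T -> Prop) (Q : U -> Prop) :
  countable P -> countable Q -> countable (fun p => P (fst p) /\ Q (snd p)).
Proof.
  intros [g Hg] [k Hk]. exists (fun p => Cantor.to_nat (g (fst p), k (snd p))).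
  intros [x1 y1] [x2 y2] [H1 H2] [H3 H4] E. cbn [fst snd] in *.
  apply pair_inj in E. injection E as E1 E2. f_equal; auto.
Qed.

Fixpoint lcode {T} (g : T -> nat) (l : list T) : nat :=
  match l with nil => 0%nat | cons x l' => S (Cantor.to_nat (g x, lcode g l')) end.

Lemma cnt_list {T} (P : T -> Prop) : countable P -> countable (fun l => Forall P l).
Proof.
  intros [g Hg]. exists (lcode g). intro x. induction x as [|a x IH]; intros [|b y] H1 H2 E; cbn [lcode] in E; try discriminate; auto.
  apply PeanoNat.Nat.succ_inj in E. apply pair_inj in E. injection E as E1 E2.
  inversion H1; inversion H2; subst. f_equal; auto.
Qed.

Lemma cnt_all_nat : countable (fun _ : nat => True).
Proof. exists (fun n => n). auto. Qed.

Lemma cnt_all_bool : countable (fun _ : bool => True).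
Proof. exists (fun b : bool => if b then 1%nat else 0%nat). intros [|] [|] _ _ E; auto; discriminate. Qed.

Lemma cnt_union {I T} (Ic : I -> Prop) (P : I -> T -> Prop) :
  countable Ic -> (forall i, Ic i -> countable (P i)) ->
  countable (fun x => exists i, Ic i /\ P i x).
Proof.
  intros [gI HI] HP.
  assert (Hg : forall i, exists g : T -> nat, Ic i -> forall x y, P i x -> P i y -> g x = g y -> x = y).
  { intro i. destruct (classic (Ic i)) as [Hi|Hi].
    - destruct (HP i Hi) as [g Hg]. exists g. auto.
    - exists (fun _ => 0%nat). tauto. }
  set (G := fun i => proj1_sig (constructive_indefinite_description _ (Hg i))).
  assert (HG : forall i, Ic i -> forall x y, P i x -> P i y -> G i x = G i y -> x = y).
  { intro i. unfold G. destruct (constructive_indefinite_description _ (Hg i)). simpl. auto. }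
  exists (fun x => match excluded_middle_informative (exists i, Ic i /\ P i x) with
    | left p => let i := proj1_sig (constructive_indefinite_description _ p) in Cantor.to_nat (gI i, G i x)
    | right _ => 0%nat end).
  intros x y Hx Hy E.
  destruct (excluded_middle_informative (exists i, Ic i /\ P i x)) as [p|n]; [|contradiction].
  destruct (excluded_middle_informative (exists i, Ic i /\ P i y)) as [q|n]; [|contradiction].
  destruct (constructive_indefinite_description _ p) as [i [Hi Hix]].
  destruct (constructive_indefinite_description _ q) as [j [Hj Hjy]]. cbv zeta in E. simpl proj1_sig in E.
  apply pair_inj in E. injection E as E1 E2. assert (i = j) by (apply HI; auto). subst j.
  apply (HG i); auto.
Qed.

Lemma dir2 (Omega : Type) (F : (Omega -> R) -> Prop) (eps : R) (d : nat) (Heps : eps > 0) :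
  (exists N : Omega -> Prop, countable N /\ fat_restr_le eps F (fun x => ~ N x) d) ->
  fat_mod_omega1_le eps F d.
Proof.
  intros [N [HN Hfat]] n A h HA Hh Hsh.
  destruct n as [|n']; [lia|].
  assert (Hex : forall i, (i < S n')%nat -> exists x, A i x /\ ~ N x).
  { intros i Hi. apply NNPP; intro Hn. apply (HA i Hi).
    apply (cnt_sub _ N); auto. intros x Hx. apply NNPP; intro; apply Hn; eauto. }
  destruct (Hex 0%nat ltac:(lia)) as [x0 _].
  assert (Hc : forall i, exists x, (i < S n')%nat -> A i x /\ ~ N x).
  { intro i. destruct (PeanoNat.Nat.lt_ge_cases i (S n')) as [Hi|Hi].
    - destruct (Hex i Hi) as [x Hx]; eauto.
    - exists x0; intro; lia. }
  set (n := S n') in *. clearbody n.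
  set (c := fun i => proj1_sig (constructive_indefinite_description _ (Hc i))).
  assert (Hcs : forall i, (i < n)%nat -> A i (c i) /\ ~ N (c i)).
  { intro i. unfold c. destruct (constructive_indefinite_description _ (Hc i)); auto. }
  assert (Hinj : forall i j, (i < n)%nat -> (j < n)%nat -> c i = c j -> i = j).
  { intros i j Hi Hj E. apply NNPP; intro Hne.
    destruct (Hsh (fun k => k = i)) as [f [_ Hf]].
    destruct (Hsh (fun k => k = j)) as [g [_ Hg]].
    destruct (Hf i Hi (c i) (proj1 (Hcs i Hi))) as [Hf1 _].
    destruct (Hf j Hj (c j) (proj1 (Hcs j Hj))) as [_ Hf2].
    destruct (Hg j Hj (c j) (proj1 (Hcs j Hj))) as [Hg1 _].
    destruct (Hg i Hi (c i) (proj1 (Hcs i Hi))) as [_ Hg2].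
    specialize (Hf1 eq_refl). specialize (Hg1 eq_refl).
    assert (Hf2' : f (c j) < h j - eps) by (apply Hf2; auto).
    assert (Hg2' : g (c i) < h i - eps) by (apply Hg2; auto).
    rewrite E in *. lra. }
  set (h' := fun a => match excluded_middle_informative (exists i, (i < n)%nat /\ c i = a) with
     | left p => h (proj1_sig (constructive_indefinite_description _ p))
     | right _ => 0 end).
  assert (Hh' : forall i, (i < n)%nat -> h' (c i) = h i).
  { intros i Hi. unfold h'. destruct (excluded_middle_informative _) as [p|np].
    - destruct (constructive_indefinite_description _ p) as [j [Hj E]]. simpl.
      f_equal. apply Hinj; auto.
    - exfalso; eauto. }
  set (L := map c (seq 0 n)).
  assert (HL : forall a, In a L -> exists i, (i < n)%nat /\ a = c i).
  { intros a Ha. unfold L in Ha. apply in_map_iff in Ha. destruct Ha as [i [E Hi]].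
    apply in_seq in Hi. exists i. split; [lia|auto]. }
  replace n with (length L) by (unfold L; rewrite length_map, length_seq; auto).
  apply Hfat.
  - apply NoDup_nth with (d := x0). intros i j Hi Hj E.
    unfold L in *; rewrite length_map, length_seq in Hi, Hj.
    rewrite (nth_indep _ x0 (c 0%nat)), (nth_indep _ x0 (c 0%nat)) in E
      by (rewrite length_map, length_seq; auto).
    rewrite !map_nth, !seq_nth in E by auto. simpl in E. apply Hinj; auto.
  - intros a Ha. destruct (HL a Ha) as [i [Hi ->]]. apply Hcs; auto.
  - exists h'. split.
    + intros a Ha. destruct (HL a Ha) as [i [Hi ->]]. rewrite Hh'; auto.
    + intro B. destruct (Hsh (fun i => B (c i))) as [f [Hf Hf2]]. exists f. split; auto.
      intros a Ha. destruct (HL a Ha) as [i [Hi ->]]. rewrite Hh' by auto.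
      apply (Hf2 i Hi). apply Hcs; auto.
Qed.

Lemma unif_margin {T} (L : list T) (P : T -> R -> Prop) :
  (forall t a b, 0 < b <= a -> P t a -> P t b) ->
  (forall t, In t L -> exists a, 0 < a /\ P t a) ->
  exists a, 0 < a /\ forall t, In t L -> P t a.
Proof.
  intros Hm. induction L as [|x L IH]; intros H.
  - exists 1. split; [lra|]. intros t [].
  - destruct IH as [a [Ha HL]]. { intros t Ht; apply H; simpl; auto. }
    destruct (H x (or_introl eq_refl)) as [b [Hb Hx]].
    exists (Rmin a b). split. { apply Rmin_glb_lt; auto. }
    intros t [->|Ht].
    + apply (Hm t b); auto. split; [apply Rmin_glb_lt; auto| apply Rmin_r].
    + apply (Hm t a); auto. split; [apply Rmin_glb_lt; auto| apply Rmin_l].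
Qed.

Lemma unif_nat {T} (L : list T) (Q : T -> nat -> Prop) :
  (forall t, In t L -> exists N, forall n, (n >= N)%nat -> Q t n) ->
  exists N, forall t, In t L -> forall n, (n >= N)%nat -> Q t n.
Proof.
  induction L as [|x L IH]; intros H.
  - exists 0%nat. intros t [].
  - destruct IH as [N1 H1]. { intros t Ht; apply H; simpl; auto. }
    destruct (H x (or_introl eq_refl)) as [N2 H2].
    exists (Nat.max N1 N2). intros t [->|Ht] n Hn.
    + apply H2; lia.
    + apply H1; auto; lia.
Qed.

Lemma list_choice {T Y} (L : list T) (Rl : T -> Y -> Prop) :
  (forall t, In t L -> exists y, Rl t y) ->
  exists ys : list (T * Y), (forall p, In p ys -> Rl (fst p) (snd p)) /\
     (forall t, In t L -> exists y, In (t, y) ys).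
Proof.
  induction L as [|x L IH]; intros H.
  - exists nil. split; [intros p []| intros t []].
  - destruct IH as [ys [H1 H2]]. { intros t Ht; apply H; simpl; auto. }
    destruct (H x (or_introl eq_refl)) as [y Hy].
    exists ((x, y) :: ys). split.
    + intros p [<-|Hp]; auto.
    + intros t [->|Ht]. * exists y; simpl; auto. * destruct (H2 t Ht) as [y' Hy']. exists y'; simpl; auto.
Qed.

Fixpoint allbl (m : nat) : list (list bool) :=
  match m with O => nil :: nil
  | S k => map (cons true) (allbl k) ++ map (cons false) (allbl k) end.

Lemma allbl_in : forall bl, In bl (allbl (length bl)).
Proof.
  induction bl as [|b bl IH]; simpl; auto.
  apply in_or_app. destruct b; [left|right]; apply in_map; auto.
Qed.

Lemma rat_approx (r del : R) : 0 <= r <= 1 -> 0 < del ->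
  exists a b : nat, 0 <= INR a / INR (S b) <= 1 /\ Rabs (INR a / INR (S b) - r) < del.
Proof.
  intros Hr Hd.
  destruct (archimed (/ del)) as [Hu _].
  assert (Hz : (0 <= up (/ del))%Z).
  { apply le_IZR. assert (0 < / del) by (apply Rinv_0_lt_compat; auto). lra. }
  set (b := Z.to_nat (up (/ del))).
  assert (HK : INR (S b) > / del).
  { rewrite S_INR. unfold b. rewrite INR_IZR_INZ, Z2Nat.id by auto; lra. }
  assert (HKp : 0 < INR (S b)) by (apply lt_0_INR; lia).
  set (K := INR (S b)) in *.
  destruct (archimed (r * K)) as [H1 H2].
  set (z := (up (r * K) - 1)%Z).
  assert (Hz1 : IZR z <= r * K) by (unfold z; rewrite minus_IZR; simpl; lra).
  assert (Hz2 : r * K < IZR z + 1) by (unfold z; rewrite minus_IZR; simpl; lra).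
  assert (Hz0 : (0 <= z)%Z).
  { assert (0 <= r * K) by (apply Rmult_le_pos; lra). apply Z.lt_pred_le. apply lt_IZR. simpl. lra. }
  exists (Z.to_nat z), b. fold K.
  rewrite INR_IZR_INZ, Z2Nat.id by auto.
  assert (Hdel : / K < del).
  { rewrite <- (Rinv_inv del). apply Rinv_lt_contravar; auto. apply Rmult_lt_0_compat; auto.
    apply Rinv_0_lt_compat; auto. }
  assert (E1 : IZR z / K <= r).
  { unfold Rdiv. apply (Rmult_le_reg_r K); auto. rewrite Rmult_assoc, Rinv_l; lra. }
  assert (E2 : r - / K < IZR z / K).
  { unfold Rdiv. apply (Rmult_lt_reg_r K); auto. rewrite Rmult_assoc, Rinv_l by lra.
    rewrite Rmult_minus_distr_r, Rinv_l by lra. lra. }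
  assert (E0 : 0 <= IZR z / K).
  { unfold Rdiv. apply Rmult_le_pos. apply IZR_le; auto. left; apply Rinv_0_lt_compat; auto. }
  split; [lra|]. rewrite Rabs_left1 by lra. lra.
Qed.

Lemma nth_map_seq {Y} (g : nat -> Y) m i dflt : (i < m)%nat -> nth i (map g (seq 0 m)) dflt = g i.
Proof.
  intro Hi. rewrite (nth_indep _ dflt (g 0%nat)) by (rewrite length_map, length_seq; auto).
  rewrite map_nth, seq_nth by auto. reflexivity.
Qed.

Section Main.
Variable Omega : Type.
Variable eps : R.

Definition qv (qs : list (nat * nat)) (i : nat) : R :=
  INR (fst (nth i qs (0%nat,0%nat))) / INR (S (snd (nth i qs (0%nat,0%nat)))).

Definition Sset (w : list (nat * nat) * list (list bool * (Omega -> R))) (i : nat) (x : Omega) : Prop :=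
  forall bl f, In (bl, f) (snd w) ->
    (nth i bl false = true -> f x > qv (fst w) i + eps) /\
    (nth i bl false = false -> f x < qv (fst w) i - eps).

Definition Valid (F' : (Omega -> R) -> Prop) (m : nat)
  (w : list (nat * nat) * list (list bool * (Omega -> R))) : Prop :=
  (forall bl f, In (bl, f) (snd w) -> F' f) /\
  (forall i, (i < m)%nat -> 0 <= qv (fst w) i <= 1) /\
  (forall J : nat -> Prop, exists bl f, In (bl, f) (snd w) /\
     forall i, (i < m)%nat -> (nth i bl false = true <-> J i)).

End Main.

Lemma cnt_valid (Omega : Type) (eps : R) (F' : (Omega -> R) -> Prop) (m : nat) :
  countable F' ->
  countable (fun wi : (list (nat * nat) * list (list bool * (Omega -> R))) * nat =>
     Valid Omega F' m (fst wi) /\ (snd wi < m)%nat /\ countable (Sset Omega eps (fst wi) (snd wi))).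
Proof.
  intro HF'.
  assert (Hp : countable (fun p : nat * nat => True)).
  { apply (cnt_sub _ (fun p : nat*nat => True /\ True)); auto. exact (cnt_prod (fun _ : nat => True) (fun _ : nat => True) cnt_all_nat cnt_all_nat). }
  assert (Hb : countable (fun l : list bool => True)).
  { apply (cnt_sub _ (fun l => Forall (fun _ => True) l)).
    - intros l _. apply Forall_forall; auto.
    - apply cnt_list, cnt_all_bool. }
  apply (cnt_sub _ (fun wi => (Forall (fun _ => True) (fst (fst wi)) /\
                              Forall (fun p => True /\ F' (snd p)) (snd (fst wi))) /\ True)).
  - intros [[qs fs] i] [[HV _] _]. cbn [fst snd] in *. split; auto. split.
    + apply Forall_forall; auto.
    + apply Forall_forall. intros [bl f] Hin. split; auto. eapply HV; eauto.
  - refine (cnt_prod (fun w : list (nat * nat) * list (list bool * (Omega -> R)) =>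
        Forall (fun _ => True) (fst w) /\ Forall (fun p => True /\ F' (snd p)) (snd w))
        (fun _ : nat => True) _ cnt_all_nat).
    refine (cnt_prod (fun l => Forall (fun _ => True) l) (fun l => Forall (fun p => True /\ F' (snd p)) l) _ _);
      apply cnt_list; auto.
    exact (cnt_prod (fun _ : list bool => True) F' Hb HF').
Qed.

Lemma dir1 (Omega : Type) (F : (Omega -> R) -> Prop) (eps : R) (d : nat)
  (Hsep : universally_separable F) (Heps : eps > 0) :
  fat_mod_omega1_le eps F d ->
  exists N : Omega -> Prop, countable N /\ fat_restr_le eps F (fun x => ~ N x) d.
Proof.
  intro H1. destruct Hsep as [F' [HF'F [HF'c Happ]]].
  set (m := S d).
  set (Ic := fun wi : (list (nat * nat) * list (list bool * (Omega -> R))) * nat =>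
     Valid Omega F' m (fst wi) /\ (snd wi < m)%nat /\ countable (Sset Omega eps (fst wi) (snd wi))).
  exists (fun x => exists wi, Ic wi /\ Sset Omega eps (fst wi) (snd wi) x).
  split.
  { apply cnt_union. apply cnt_valid; auto. intros wi [_ [_ H]]; auto. }
  intros A Hnd Hout [h [Hh Hsh]].
  destruct (PeanoNat.Nat.le_gt_cases (length A) d) as [Hle|Hgt]; auto. exfalso.
  destruct A as [|a0 A']; [simpl in Hgt; lia|]. set (A := a0 :: A') in *. clearbody A.
  set (pts := fun i => nth i A a0).
  assert (Hpin : forall i, (i < m)%nat -> In (pts i) A).
  { intros i Hi. apply nth_In. unfold m in Hi. lia. }
  assert (Hpinj : forall i j, (i < m)%nat -> (j < m)%nat -> pts i = pts j -> i = j).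
  { intros i j Hi Hj E. eapply NoDup_nth; eauto; unfold m in *; lia. }
  set (Good := fun bl del => exists f, F' f /\ forall i, (i < m)%nat ->
      (nth i bl false = true -> f (pts i) > h (pts i) + eps + del) /\
      (nth i bl false = false -> f (pts i) < h (pts i) - eps - del)).
  assert (HGm : forall bl a b, 0 < b <= a -> Good bl a -> Good bl b).
  { intros bl a b Hab [f [Hf Hi]]. exists f. split; auto. intros i Hi'.
    destruct (Hi i Hi') as [X Y]. split; intro Z; [specialize (X Z)|specialize (Y Z)]; lra. }
  assert (HG : forall bl, exists del, 0 < del /\ Good bl del).
  { intro bl.
    destruct (Hsh (fun a => exists i, (i < m)%nat /\ pts i = a /\ nth i bl false = true)) as [f [Hf Hf2]].
    set (P := fun i del => (nth i bl false = true -> f (pts i) > h (pts i) + eps + del) /\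
      (nth i bl false = false -> f (pts i) < h (pts i) - eps - del)).
    destruct (unif_margin (seq 0 m) P) as [mu [Hmu HP]].
    { intros i a b Hab [X Y]. split; intro Z; [specialize (X Z)|specialize (Y Z)]; lra. }
    { intros i Hi. apply in_seq in Hi. destruct Hi as [_ Hi]. simpl in Hi.
      destruct (Hf2 (pts i) (Hpin i Hi)) as [X Y].
      destruct (nth i bl false) eqn:Eb.
      - assert (Z : f (pts i) > h (pts i) + eps) by (apply X; exists i; auto).
        exists ((f (pts i) - h (pts i) - eps) / 2). split; [lra|]. split; intro; [lra|congruence].
      - assert (Z : f (pts i) < h (pts i) - eps).
        { apply Y. intros [j [Hj [E Ej]]]. apply Hpinj in E; auto. subst j. congruence. }
        exists ((h (pts i) - eps - f (pts i)) / 2). split; [lra|]. split; intro; [congruence|lra]. }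
    destruct (Happ f Hf) as [u [Hu Hcv]].
    destruct (unif_nat (seq 0 m) (fun i n => Rabs (u n (pts i) - f (pts i)) < mu / 2)) as [N HN].
    { intros i _. destruct (Hcv (pts i) (mu / 2)) as [N HN]; [lra|]. exists N. intros n Hn.
      apply HN. lia. }
    exists (mu / 2). split; [lra|]. exists (u N). split; auto. intros i Hi.
    assert (Hs : In i (seq 0 m)) by (apply in_seq; lia).
    destruct (HP i Hs) as [X Y]. specialize (HN i Hs N (le_n N)).
    apply Rabs_def2 in HN. destruct HN as [HN1 HN2].
    split; intro Z; [specialize (X Z)|specialize (Y Z)]; lra. }
  destruct (unif_margin (allbl m) Good HGm) as [del [Hdel HGd]].
  { intros bl _. apply HG. }
  destruct (list_choice (allbl m) (fun bl f => F' f /\ forall i, (i < m)%nat ->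
      (nth i bl false = true -> f (pts i) > h (pts i) + eps + del) /\
      (nth i bl false = false -> f (pts i) < h (pts i) - eps - del))) as [fs [Hfs1 Hfs2]].
  { intros bl Hbl. destruct (HGd bl Hbl) as [f Hf]. exists f. exact Hf. }
  assert (Hq : forall i, exists p : nat * nat, (i < m)%nat ->
     0 <= INR (fst p) / INR (S (snd p)) <= 1 /\ Rabs (INR (fst p) / INR (S (snd p)) - h (pts i)) < del).
  { intro i. destruct (PeanoNat.Nat.lt_ge_cases i m) as [Hi|Hi].
    - destruct (rat_approx (h (pts i)) del) as [a [b Hab]]; auto.
      exists (a, b). intros _. exact Hab.
    - exists (0%nat, 0%nat). intro; lia. }
  set (cq := fun i => proj1_sig (constructive_indefinite_description _ (Hq i))).
  assert (Hcq : forall i, (i < m)%nat -> 0 <= INR (fst (cq i)) / INR (S (snd (cq i))) <= 1 /\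
     Rabs (INR (fst (cq i)) / INR (S (snd (cq i))) - h (pts i)) < del).
  { intro i. unfold cq. destruct (constructive_indefinite_description _ (Hq i)); auto. }
  set (qs := map cq (seq 0 m)).
  assert (Hqv : forall i, (i < m)%nat -> qv qs i = INR (fst (cq i)) / INR (S (snd (cq i)))).
  { intros i Hi. unfold qv, qs. rewrite nth_map_seq by auto. reflexivity. }
  set (w := (qs, fs)).
  assert (HV : Valid Omega F' m w).
  { split; [|split].
    - intros bl f Hin. apply (Hfs1 _ Hin).
    - intros i Hi. cbn [fst]. rewrite Hqv by auto. apply Hcq; auto.
    - intro J. set (bl := map (fun i => if excluded_middle_informative (J i) then true else false) (seq 0 m)).
      assert (Hbl : In bl (allbl m)).
      { assert (Hl : length bl = m) by (unfold bl; rewrite length_map, length_seq; auto). rewrite <- Hl. apply allbl_in. }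
      destruct (Hfs2 bl Hbl) as [f Hf]. exists bl, f. split; auto.
      intros i Hi. unfold bl. rewrite nth_map_seq by auto.
      destruct (excluded_middle_informative (J i)); split; auto; discriminate. }
  assert (HS : forall i, (i < m)%nat -> Sset Omega eps w i (pts i)).
  { intros i Hi bl f Hin. cbn [fst snd]. rewrite Hqv by auto.
    destruct (Hfs1 _ Hin) as [_ Hf]. cbn [fst snd] in Hf. destruct (Hf i Hi) as [X Y].
    destruct (Hcq i Hi) as [_ Hc]. apply Rabs_def2 in Hc. destruct Hc as [Hc1 Hc2].
    split; intro Z; [specialize (X Z)|specialize (Y Z)]; lra. }
  assert (Hc : exists i, (i < m)%nat /\ countable (Sset Omega eps w i)).
  { apply NNPP. intro Hn.
    assert (m <= d)%nat; [|unfold m in *; lia].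
    apply (H1 m (Sset Omega eps w) (qv qs)).
    - intros i Hi Hc. apply Hn. eauto.
    - intros i Hi. destruct HV as [_ [X _]]. apply X; auto.
    - intro J. destruct HV as [Hf [_ HJ]]. destruct (HJ J) as [bl [f [Hin Hbl]]].
      exists f. split. { apply HF'F. apply (Hf bl f Hin). }
      intros i Hi x Hx. destruct (Hx bl f Hin) as [X Y]. split; intro Z.
      + apply X. apply Hbl; auto.
      + apply Y. destruct (nth i bl false) eqn:E; auto. exfalso. apply Z. apply Hbl; auto. }
  destruct Hc as [i [Hi Hci]].
  apply (Hout (pts i) (Hpin i Hi)). exists (w, i). split.
  - split; auto.
  - apply HS; auto.
Qed.

Theorem mainTheorem14 (Omega : Type) (F : (Omega -> R) -> Prop) (eps : R) (d : nat)
  (HF : forall f, F f -> forall x, 0 <= f x <= 1)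
  (Hsep : universally_separable F)
  (Heps : eps > 0) :
  fat_mod_omega1_le eps F d <->
  exists N : Omega -> Prop, countable N /\ fat_restr_le eps F (fun x => ~ N x) d.
Proof.
  split.
  - apply dir1; auto.
  - apply dir2; auto.
Qed.
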